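(* Consider the state process of the load-balancing system described in the context (under any dispatching policy), with $\lambda=1-N^{-\alpha}$, $0<\alpha<0.5$, and the Lyapunov function $V(s)=\frac{p\lambda}{\mu_2}-s_{1,2}$ on $\mathcal S^{(N)}$. Then for $s\in\mathcal S^{(N)}$: (i) if $V(s)\ge\left(\frac{p\mu_1}{\mu_2}+\frac12\right)\frac{\log N}{\sqrt N}$ and $s_{1,1}\ge\frac{\lambda}{\mu_1}-\frac{\log N}{\sqrt N}$, then $\nabla V(s)\le -\frac{\mu_2}{2}\frac{\log N}{\sqrt N}$; (ii) if $V(s)\ge\left(\frac{p\mu_1}{\mu_2}+\frac12\right)\frac{\log N}{\sqrt N}$ and $s_{1,1}\le\frac{\lambda}{\mu_1}-\frac{\log N}{\sqrt N}$, then $\nabla V(s)\le 1$.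
   Context: System: $N$ identical servers, Poisson arrivals of rate $\lambda N$. Service times are Coxian-2 with parameters $(\mu_1,\mu_2,p)$, $\mu_1,\mu_2>0$, $0\le p<1$: a job in service completes phase 1 at rate $\mu_1$; then with probability $1-p$ it leaves, and with probability $p$ it enters phase 2, completed at rate $\mu_2$; $\frac1{\mu_1}+\frac p{\mu_2}=1$. Each server holds at most $b$ jobs (one in service, the rest in its buffer, served in order). The state $s=(s_{i,m})$ has $s_{i,m}$ = fraction of servers with at least $i$ jobs whose job in service is in phase $m$; state space $\mathcal S^{(N)}=\{s\in\mathbb R^{b\times2}: 1\ge s_{1,m}\ge\cdots\ge s_{b,m}\ge0,\ s_{1,1}+s_{1,2}\le1,\ Ns_{i,m}\in\mathbb N\}$. The state evolves as a CTMC with transition rates $q_{s,s'}$ induced by arrivals (dispatched by the policy), phase-1 completions, and phase-2 completions; the drift of $V$ at $s$ is $\nabla V(s)=\sum_{s'\ne s}q_{s,s'}(V(s')-V(s))$. *)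

(* Defs.v *)
From HB Require Import structures.
From mathcomp Require Import all_boot all_order all_algebra.
From mathcomp Require Import all_classical all_reals all_analysis.
Set Implicit Arguments. Unset Strict Implicit. Unset Printing Implicit Defensive.
Import Order.TTheory GRing.Theory Num.Theory.
Local Open Scope ring_scope.

(* Load-balancing system: N servers, buffer size b, Coxian-2 service.
   A state is a b x 2 real matrix: entry (i, m) (i : 'I_b, m : 'I_2) is
   s_{i+1, m+1} = fraction of servers with at least i+1 jobs whose job in
   service is in phase m+1. *)

Section LB.
Variables (R : realType) (N b : nat).

Definition state := 'M[R]_(b, 2).

Definition ph1 : 'I_2 := ord0.
Definition ph2 : 'I_2 := ord_max.

(* s_{k,m} for a 1-based level k; equals 0 beyond the buffer (k > b). *)
Definition sv (s : state) (k : nat) (m : 'I_2) : R :=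
  oapp (fun i : 'I_b => s i m) 0 (insub k.-1).

Definition in_state (s : state) : Prop :=
  [/\ (forall i m, 0 <= s i m <= 1),
      (forall (i j : 'I_b) m, (i <= j)%N -> s j m <= s i m),
      (0 < b)%N -> sv s 1 ph1 + sv s 1 ph2 <= 1
    & (forall i m, exists k : nat, N%:R * s i m = k%:R)].

Definition bump (s : state) (lo hi : nat) (m : 'I_2) (d : R) : state :=
  \matrix_(i < b, j < 2)
     (s i j + (if (j == m) && (lo <= i.+1 <= hi)%N then d else 0)).

Definition cnt (s : state) (k : nat) (m : 'I_2) : R :=
  N%:R * (sv s k m - sv s k.+1 m).

(* classes an arrival can be dispatched to: None = an idle server,
   Some (i, m) = a server with exactly i+1 jobs, job in service in phase m+1 *)
Definition cls := option ('I_b * 'I_2).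

Definition cls_count (s : state) (o : cls) : R :=
  match o with
  | None => N%:R * (1 - sv s 1 ph1 - sv s 1 ph2)
  | Some (i, m) => cnt s i.+1 m
  end.

Definition policy := state -> cls -> R.

Definition is_policy (pol : policy) : Prop :=
  forall s, in_state s ->
    [/\ (forall o, 0 <= pol s o),
        \sum_(o : cls) pol s o = 1
      & (forall o, cls_count s o = 0 -> pol s o = 0)].

Definition arr (s : state) (o : cls) : state :=
  match o with
  | None => bump s 1 1 ph1 (N%:R^-1)
  | Some (i, m) => if (i.+1 < b)%N then bump s i.+2 i.+2 m (N%:R^-1) else s
  end.
(* phase-1 completion, job leaves, at a server with k jobs *)
Definition dep1 (s : state) (k : nat) : state := bump s k k ph1 (- N%:R^-1).
(* phase-1 completion, job moves to phase 2, at a server with k jobs *)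
Definition mv12 (s : state) (k : nat) : state :=
  bump (bump s 1 k ph1 (- N%:R^-1)) 1 k ph2 (N%:R^-1).
(* phase-2 completion at a server with k jobs; next job starts in phase 1 *)
Definition dep2 (s : state) (k : nat) : state :=
  bump (bump s 1 k ph2 (- N%:R^-1)) 1 k.-1 ph1 (N%:R^-1).

Definition events (lam mu1 mu2 p : R) (pol : policy) (s : state)
  : seq (R * state) :=
  [seq (mu1 * (1 - p) * cnt s k ph1, dep1 s k) | k <- iota 1 b]
  ++ [seq (mu1 * p * cnt s k ph1, mv12 s k) | k <- iota 1 b]
  ++ [seq (mu2 * cnt s k ph2, dep2 s k) | k <- iota 1 b]
  ++ [seq (lam * N%:R * pol s o, arr s o) | o <- enum {: cls}].

(* drift (generator applied to V) at s:
   sum_{s' <> s} q_{s,s'} (V s' - V s); self-loops contribute 0 *)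
Definition drift (lam mu1 mu2 p : R) (pol : policy) (V : state -> R)
  (s : state) : R :=
  \sum_(e <- events lam mu1 mu2 p pol s) e.1 * (V e.2 - V s).

End LB.

(* Main.v *)
Require Import Defs.
From HB Require Import structures.
From mathcomp Require Import all_boot all_order all_algebra.
From mathcomp Require Import all_classical all_reals all_analysis.
From mathcomp.algebra_tactics Require Import ring lra.
Import Order.TTheory GRing.Theory Num.Theory.
Local Open Scope ring_scope.

Section H.
Variables (R : realType) (N b : nat) (hb : (0 < b)%N) (hN : (0 < N)%N).

Lemma sv1 (x : state R b) m : sv x 1 m = x (Ordinal hb) m.
Proof. by rewrite /sv /= insubT. Qed.

Lemma svb (x : state R b) m : sv x b.+1 m = 0.
Proof. by rewrite /sv /= insubF // ltnn. Qed.

Lemma bump1 (x : state R b) (lo hi : nat) (m : 'I_2) (d : R) (m' : 'I_2) :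
  sv (Defs.bump x lo hi m d) 1 m' = sv x 1 m' + if (m' == m) && (lo <= 1 <= hi)%N then d else 0.
Proof. by rewrite !sv1 /Defs.bump mxE. Qed.

Lemma tele (f : nat -> R) :
  \sum_(k <- iota 1 b) (f k - f k.+1) = f 1%N - f b.+1.
Proof.
have -> : iota 1 b = index_iota 1 b.+1 by rewrite /index_iota subn1.
rewrite -(opprB (f b.+1)) -telescope_sumr // -sumrN; apply: eq_bigr => i _.
by rewrite opprB.
Qed.

Lemma drift_eq lam mu1 mu2 p pol c (s : state R b) :
  drift N lam mu1 mu2 p pol (fun x => c - sv x 1 ph2) s
  = mu2 * sv s 1 ph2 - p * mu1 * sv s 1 ph1.
Proof.
have hN' : (N%:R : R) != 0 by rewrite pnatr_eq0 -lt0n.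
rewrite /drift /events; set E := enum _; rewrite !big_cat /= !big_map.
rewrite [X in X + _]big1; last first.
  by move=> k _; rewrite /= /dep1 bump1 /= addr0 subrr mulr0.
rewrite [X in _ + (_ + (_ + X))]big1; last first.
  move=> o _; case: o => [[i m]|] /=.
    case: ifP => _; last by rewrite subrr mulr0.
    by rewrite bump1 andbF addr0 subrr mulr0.
  by rewrite bump1 /= addr0 subrr mulr0.
rewrite add0r addr0.
have -> : \sum_(j <- iota 1 b) (fun e : R * state R b => e.1 * (c - sv e.2 1 ph2 - (c - sv s 1 ph2)))
   (mu1 * p * cnt N s j ph1, mv12 N s j) =
   - (p * mu1) * \sum_(j <- iota 1 b) (sv s j ph1 - sv s j.+1 ph1).
  rewrite big_distrr; apply: eq_big_seq => k; rewrite mem_iota => /andP[k1 _].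
  rewrite /= /mv12 !bump1 /= k1 /= addr0 /cnt.
  by field.
have -> : \sum_(j <- iota 1 b) (fun e : R * state R b => e.1 * (c - sv e.2 1 ph2 - (c - sv s 1 ph2)))
   (mu2 * cnt N s j ph2, dep2 N s j) =
   mu2 * \sum_(j <- iota 1 b) (sv s j ph2 - sv s j.+1 ph2).
  rewrite big_distrr; apply: eq_big_seq => k; rewrite mem_iota => /andP[k1 _].
  rewrite /= /dep2 !bump1 /= k1 /= addr0 /cnt.
  by field.
rewrite !tele !svb !subr0; lra.
Qed.
End H.


Theorem lemma13 (R : realType) (N b : nat) (alpha mu1 mu2 p : R)
  (pol : policy R b)
  (hN : (0 < N)%N) (hb : (0 < b)%N)
  (ha : 0 < alpha) (ha' : alpha < 1 / 2)
  (hmu1 : 0 < mu1) (hmu2 : 0 < mu2) (hp : 0 <= p) (hp' : p < 1)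
  (hmean : mu1^-1 + p / mu2 = 1)
  (hpol : is_policy N pol) :
  let lam := 1 - (N%:R : R) `^ (- alpha) in
  let L := ln (N%:R : R) / Num.sqrt (N%:R : R) in
  let V := fun s : state R b => p * lam / mu2 - sv s 1 ph2 in
  forall s : state R b, in_state N s ->
    (V s >= (p * mu1 / mu2 + 1 / 2) * L ->
     sv s 1 ph1 >= lam / mu1 - L ->
     drift N lam mu1 mu2 p pol V s <= - (mu2 / 2) * L)
    /\
    (V s >= (p * mu1 / mu2 + 1 / 2) * L ->
     sv s 1 ph1 <= lam / mu1 - L ->
     drift N lam mu1 mu2 p pol V s <= 1).
Proof.
move=> lam L V s Hs.
rewrite /V drift_eq //.
have hL : 0 <= L.
  apply: divr_ge0; last exact: sqrtr_ge0.
  by apply: ln_ge0; rewrite ler1n.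
have hlam : lam <= 1.
  rewrite /lam; have := @powR_ge0 R (N%:R) (- alpha); lra.
have hx : 0 <= sv s 1 ph1.
  case: Hs => H1 _ _ _; rewrite sv1; by case/andP: (H1 (Ordinal hb) ph1).
set x := sv s 1 ph1; set y := sv s 1 ph2.
have hV : (p * mu1 / mu2 + 1 / 2) * L <= p * lam / mu2 - y ->
    mu2 * y <= p * lam - p * mu1 * L - mu2 * L / 2.
  move=> h; have := h; rewrite -(ler_pM2l hmu2).
  have -> : mu2 * ((p * mu1 / mu2 + 1 / 2) * L) = p * mu1 * L + mu2 * L / 2.
    by field; rewrite gt_eqF.
  have -> : mu2 * (p * lam / mu2 - y) = p * lam - mu2 * y.
    by field; rewrite gt_eqF.
  lra.
have hpm : 0 <= p * mu1 by apply: mulr_ge0 => //; apply: ltW.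
split=> h1 h2; have h3 := hV h1.
  have : p * mu1 * (lam / mu1 - L) <= p * mu1 * x by apply: ler_wpM2l.
  have -> : p * mu1 * (lam / mu1 - L) = p * lam - p * mu1 * L.
    by field; rewrite gt_eqF.
  lra.
have h4 : 0 <= p * mu1 * x by apply: mulr_ge0.
have h5 : 0 <= p * mu1 * L by apply: mulr_ge0.
have h6 : 0 <= mu2 * L by apply: mulr_ge0 => //; apply: ltW.
have h7 : p * lam <= p by rewrite -{2}(mulr1 p); apply: ler_wpM2l.
lra.
Qed.
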